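(* Let $m\ge1$, $n=2^m-1$ and $\iota\in\dot F^m$. For every $\bar z\in F^n$ it holds that $\Omega(R_\iota+\bar z)=\Omega(R_\iota+\bar z+\bar e^{(\iota)})$.
   Context: $F^m$ denotes the vector space of binary $m$-tuples over $GF(2)$, and $\dot F^m := F^m\setminus\{0^m\}$. The coordinates of words $\bar w\in F^n$ ($n=2^m-1$) are indexed by the elements of $\dot F^m$, $\bar w=\{w_\alpha\}_{\alpha\in\dot F^m}$ (in some fixed order). $\bar e^{(\iota)}\in F^n$ is the word with a single $1$ in the coordinate indexed by $\iota$. The Hamming code is $H:=\{\bar c\in F^n \mid \sum_{\alpha\in\dot F^m} c_\alpha\alpha = 0^m\}$. For $\iota\in\dot F^m$, $R_\iota := \{\bar c\in H \mid c_\alpha=c_{\alpha+\iota} \text{ for all } \alpha\in F^m\setminus\{0^m,\iota\}\}$. For $M\subset F^n$, $\Omega(M)$ is the set of words at Hamming distance at most $1$ from some element of $M$. *)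

(* Defs.v *)
From mathcomp Require Import all_boot all_order all_algebra.
Set Implicit Arguments. Unset Strict Implicit. Unset Printing Implicit Defensive.
Import GRing.Theory.
Local Open Scope ring_scope.

Definition Fm (m : nat) := 'rV['F_2]_m.
Notation Fdot m := {a : 'rV['F_2]_m | a != 0}.
(* words of length n = 2^m - 1, coordinates indexed by \dot F^m *)
Notation word m := {ffun Fdot m -> 'F_2}.

Definition e_unit (m : nat) (iota : Fdot m) : word m :=
  [ffun a => if a == iota then 1 else 0].

Definition hamming (m : nat) : {set word m} :=
  [set c : word m | \sum_(a : Fdot m) c a *: val a == 0].

Definition R_iota (m : nat) (iota : Fdot m) : {set word m} :=
  [set c in hamming m | [forall a : Fdot m, forall b : Fdot m,
      (a != iota) ==> (val b == val a + val iota) ==> (c a == c b)]].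

Definition hdist (m : nat) (u v : word m) : nat := #|[set a | u a != v a]|.

Definition Omega (m : nat) (M : {set word m}) : {set word m} :=
  [set w : word m | [exists c in M, hdist w c <= 1]%N].

Definition transl (m : nat) (M : {set word m}) (z : word m) : {set word m} :=
  [set (c + z : word m) | c : word m in M].

(* Main.v *)
Require Import Defs.
From mathcomp Require Import all_boot all_order all_algebra.
Local Open Scope ring_scope.
Import GRing.Theory.

Lemma f2xx (x : 'F_2) : x + x = 0.
Proof. apply/eqP; move: x; do ![case=> [[|[|//]] ?]]; by []. Qed.

Lemma f2neq (x y : 'F_2) : x != y -> x = y + 1.
Proof. move: x y => [[|[|//]] ?] [[|[|//]] ?]; by move=> h; apply/eqP. Qed.

Lemma rowxx m (x : 'rV['F_2]_m) : x + x = 0.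
Proof. by apply/rowP => i; rewrite !mxE f2xx. Qed.

Lemma hdist_le1 m (w v : word m) : (hdist w v <= 1)%N ->
  w = v \/ exists b, w = v + e_unit b.
Proof.
rewrite /hdist => h.
case: (set0Pn [set a | w a != v a]) => [[b hb]|E]; last first.
  left; apply/ffunP => a; apply/eqP; apply: contraT => ne.
  by case: E; exists a; rewrite inE.
right; exists b; apply/ffunP => a. rewrite !ffunE /e_unit ?ffunE.
have /card_le1_eqP H := h.
case: (a =P b) => [->|ne]; first by apply: f2neq; move: hb; rewrite inE.
rewrite addr0; apply/eqP; apply: contraT => nea.
by case: ne; apply: H => //; rewrite inE.
Qed.

Lemma hdist_e m (v : word m) (b : Fdot m) : (hdist (v + e_unit b)%R v <= 1)%N.
Proof.
rewrite /hdist; apply: (leq_trans _ (eq_leq (cards1 b))); apply: subset_leq_card; apply/subsetP => a.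
rewrite !inE ffunE /e_unit ?ffunE; case: (a =P b) => [->|_]; [by []|by rewrite addr0 eqxx].
Qed.

Lemma hdist_0 m (v : word m) : (hdist v v <= 1)%N.
Proof.
rewrite /hdist; apply: (leq_trans _ (leq0n 1)) => //.
by rewrite leqn0 cards_eq0; apply/eqP/setP => a; rewrite !inE eqxx.
Qed.

Lemma sum_e m (b : Fdot m) : \sum_(a : Fdot m) (if a == b then 1 else 0) *: val a = val b.
Proof.
rewrite (bigD1 b) //= big1 ?addr0; first by rewrite eqxx scale1r.
by move=> a /negPf ne; rewrite ne scale0r.
Qed.

Lemma hamD m (c d : word m) : c \in hamming m -> d \in hamming m ->
  c + d \in hamming m.
Proof.
rewrite !inE => /eqP hc /eqP hd.
under eq_bigr do rewrite ffunE scalerDl.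
by rewrite big_split /= hc hd addr0.
Qed.

Lemma e_ham m (b : Fdot m) (b' : Fdot m) (iota : Fdot m) :
  val b' = val b + val iota ->
  e_unit iota + e_unit b + e_unit b' \in hamming m.
Proof.
move=> hb'; rewrite inE.
under eq_bigr do rewrite !ffunE !scalerDl.
rewrite !big_split /= !sum_e hb'.
apply/eqP; apply/rowP => i; rewrite !mxE.
move: (val iota 0 i) (val b 0 i); do ![case=> [[|[|//]] ?]]; by apply/eqP.
Qed.

Lemma F2_sub_eq m (x y : 'rV['F_2]_m) : x + y = 0 -> x = y.
Proof.
move=> h; apply/rowP => i; have := congr1 (fun M : 'rV['F_2]_m => M 0 i) h; rewrite !mxE.
move: (x 0 i) (y 0 i) => [[|[|//]] ?] [[|[|//]] ?] //= /eqP //= _; by apply/eqP.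
Qed.

Lemma addfE m (f g : word m) a : (f + g) a = f a + g a.
Proof. by rewrite ffunE. Qed.

Lemma incl m (iota : Fdot m) (z : word m) :
  Omega (transl (R_iota iota) z) \subset Omega (transl (R_iota iota) (z + e_unit iota)).
Proof.
apply/subsetP => w; rewrite !inE => /existsP [v /andP [vin hv]].
case/imsetP: vin => c cR ev; subst v.
apply/existsP.
have brute : forall (x y : word m), (forall a, x a = y a) -> x = y.
  by move=> x y hh; apply/ffunP.
case: (@hdist_le1 _ _ _ hv) => [-> | [b ->]].
  exists (c + (z + e_unit iota)); apply/andP; split.
    by apply/imsetP; exists c.
  have -> : c + z = c + (z + e_unit iota) + e_unit iota.
    apply: brute => a; rewrite !addfE.
    move: (c a) (z a) (e_unit iota a); do ![case=> [[|[|//]] ?]]; by apply/eqP.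
  exact: hdist_e.
case: (eqVneq b iota) => [->|nb].
  exists (c + (z + e_unit iota)); apply/andP; split.
    by apply/imsetP; exists c.
  by rewrite addrA; exact: hdist_0.
have nz : val b + val iota != 0.
  apply: contra nb => /eqP h; apply/eqP; apply: val_inj; exact: F2_sub_eq.
pose b' : Fdot m := exist _ (val b + val iota) nz.
pose c' := c + (e_unit iota + e_unit b + e_unit b').
exists (c' + (z + e_unit iota)); apply/andP; split.
  apply/imsetP; exists c' => //.
  move: cR; rewrite /R_iota inE => /andP [cH /forallP cF].
  rewrite inE.
  apply/andP; split.
    have := @hamD _ c (e_unit iota + e_unit b + e_unit b') cH (@e_ham _ b b' iota erefl).
    by rewrite inE.
  apply/forallP => a; apply/forallP => d; apply/implyP => na; apply/implyP => /eqP hd.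
  have := cF a => /forallP /(_ d); rewrite na hd eqxx /= => /eqP cad.
  rewrite /c' !addfE /e_unit !ffunE cad (negPf na).
  have -> : (d == iota) = false.
    apply/negP => /eqP di; move: hd; rewrite di => hd.
    have := congr1 (fun x => x + val iota) hd; rewrite /= rowxx -addrA rowxx addr0 => ha.
    by move: ha; case: a {na hd cad} => x xn /= hx; move: xn; rewrite -hx eqxx.
  have eq1 : (a == b) = (d == b').
    apply/eqP/eqP => [ab|db]; first by apply: val_inj; rewrite /= hd ab.
    apply: val_inj; have h2 := congr1 val db; rewrite /= hd in h2; exact: addIr h2.
  have eq2 : (a == b') = (d == b).
    apply/eqP/eqP => [ab|db]; first by apply: val_inj; rewrite /= hd ab /= -addrA rowxx addr0.
    by apply: val_inj; rewrite /= -db hd -addrA rowxx addr0.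
  rewrite eq1 eq2.
  case: (d == b'); case: (d == b); by rewrite ?addr0 ?add0r // addrC.
have -> : c + z + e_unit b = c' + (z + e_unit iota) + e_unit b'.
  apply: brute => a; rewrite /c' !addfE.
  move: (c a) (z a) (e_unit iota a) (e_unit b a) (e_unit b' a);
    do ![case=> [[|[|//]] ?]]; by apply/eqP.
exact: hdist_e.
Qed.

Theorem lemma1 (m : nat) (hm : (1 <= m)%N) (iota : Fdot m) (z : word m) :
  Omega (transl (R_iota iota) z) = Omega (transl (R_iota iota) (z + e_unit iota)).
Proof.
apply/eqP; rewrite eqEsubset incl /=.
have := incl _ iota (z + e_unit iota).
have -> : z + e_unit iota + e_unit iota = z.
  by apply/ffunP => a; rewrite !ffunE -addrA f2xx addr0.
by [].
Qed.
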